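(* Let $(T,f,(\le_h))$ be an ordered merge tree and $\tau\colon[0,1]\to T$ a partial in-order curve (in particular, any in-order curve) on $T$. For every $x\in T$ and all $t_1\le t_2$ with $\tau(t_1)=\tau(t_2)=x$, we have $\tau(t)\in T_x$ for all $t\in[t_1,t_2]$.
   Context: A merge tree $(T,f)$: a finite rooted tree $T$ identified with its topological realisation, with a continuous $f\colon T\to\mathbb{R}\cup\{\infty\}$ strictly increasing towards the root, $f(v)=\infty$ iff $v$ is the root; lowest leaf at height $0$. $T_x$ is the subtree of descendants of $x$ (points reachable from $x$ by an $f$-decreasing path); $\mathrm{anc}_h(x)$ the unique ancestor of $x$ at height $h$; $\mathbb{L}_h=\{x:f(x)=h\}$. A layer-order is a family $(\le_h)_{h\ge0}$ of total orders on the $\mathbb{L}_h$ that is consistent ($h_1\le h_2$, $x_1\le_{h_1}x_2$ imply $\mathrm{anc}_{h_2}(x_1)\le_{h_2}\mathrm{anc}_{h_2}(x_2)$); $(T,f,(\le_h))$ is an ordered merge tree. For a curve $\sigma\colon[0,1]\to T$, the number of times $\sigma$ visits $x$ is the number of connected components of $\sigma^{-1}(x)$. $\deg(x)$ is the down-degree of $x$ ($1$ for edge-interior points, $0$ for leaves). For a vertex $v$ and a strict ancestor $x$ of $v$ on the parent edge of $v$ (possibly its upper endpoint), the planted subtree is $T_{x,v}=T_v\cup[x,v]$ with root $x$; it is $\sigma$-unvisited if all its points except possibly $x$ are unvisited; the $\sigma$-unvisited degree of $x$ is the number of $\sigma$-unvisited planted subtrees rooted at $x$. A curve $\tau\colon[0,1]\to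 T$ starting and ending at the root is a partial in-order curve if (1) for all $t_1,t_2$ with $f(\tau(t_1))=f(\tau(t_2))=h$ and $\tau(t_1)<_h\tau(t_2)$ we have $t_1<t_2$, and (2) each $x$ is visited exactly $\deg(x)+1-\kappa$ times, $\kappa$ the $\tau$-unvisited degree of $x$; it is an in-order curve if moreover each $x$ is visited exactly $\deg(x)+1$ times. *)

(* Defs.v *)
From HB Require Import structures.
From mathcomp Require Import all_boot all_order all_algebra.
From mathcomp Require Import all_classical all_reals all_analysis.
Set Implicit Arguments. Unset Strict Implicit. Unset Printing Implicit Defensive.
Import Order.TTheory GRing.Theory Num.Theory numFieldNormedType.Exports.
Local Open Scope ring_scope.
Local Open Scope classical_set_scope.

(* Points of the topological realisation of a merge tree.
   The combinatorial tree has vertex set V, root [root], parent map [parent]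
   and vertex heights [fv] (the height of the root, +oo, is not stored).
   A point is either the root [PRoot], or [POn v h]: the unique point on the
   half-open edge [v, parent v) at height h (f is strictly monotone and
   continuous on each edge, hence a homeomorphism onto its image, so points
   of an edge are parametrised by their height). *)
Inductive pt (V : Type) (R : Type) := PRoot | POn of V & R.
Arguments PRoot {V R}.

Section MergeTree.
Variables (R : realType) (V : finType) (root : V) (parent : V -> V) (fv : V -> R).

Definition anc_or_self (w v : V) : Prop := exists n, iter n parent v = w.

Definition children (v : V) := [pred c : V | (c != root) && (parent c == v)].

Definition is_leaf (v : V) : Prop := v != root /\ #|children v| = 0%N.

Definition merge_tree : Prop :=
  [/\ parent root = root,
      (forall v : V, iter #|V| parent v = root),
      (forall v : V, v != root -> parent v != root -> fv v < fv (parent v))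
    & exists2 l, is_leaf l & fv l = 0 /\ forall l', is_leaf l' -> 0 <= fv l'].

Definition valid (x : pt V R) : Prop :=
  match x with
  | PRoot => True
  | POn v h => [/\ v != root, fv v <= h & (parent v = root \/ h < fv (parent v))]
  end.

(* height: None stands for +oo *)
Definition hgt (x : pt V R) : option R :=
  match x with PRoot => None | POn _ h => Some h end.

Definition layer (h : R) (x : pt V R) : Prop := valid x /\ hgt x = Some h.

(* desc y x  <->  y \in T_x  (y is a descendant of x, or x itself) *)
Definition desc (y x : pt V R) : Prop :=
  valid y /\ valid x /\
  match x, y with
  | PRoot, _ => True
  | POn w k, POn v h => anc_or_self w v /\ h <= k
  | POn _ _, PRoot => False
  end.

(* reparametrised height in [0,1] used to define the (path) metric of the
   realisation: edge lengths g(f(parent v)) - g(f(v)) > 0, root at g = 1 *)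
Definition g (x : pt V R) : R :=
  match x with PRoot => 1 | POn _ h => h / (1 + h) end.

(* the tree path distance between x and y is < e
   (geodesic through a common ancestor) *)
Definition close (x y : pt V R) (e : R) : Prop :=
  exists c, [/\ desc x c, desc y c & (g c - g x) + (g c - g y) < e].

Definition curve (s : R -> pt V R) : Prop :=
  (forall t, 0 <= t <= 1 -> valid (s t)) /\
  (forall t, 0 <= t <= 1 -> forall e, 0 < e -> exists2 d, 0 < d &
     forall u, 0 <= u <= 1 -> `|u - t| < d -> close (s u) (s t) e).

Definition preim (s : R -> pt V R) (x : pt V R) : set R :=
  [set t | 0 <= t <= 1 /\ s t = x].

Definition ncomp (A : set R) (n : nat) : Prop :=
  exists C : 'I_n -> set R,
    [/\ injective C,
        (forall i, exists2 t, A t & C i = connected_component A t)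
      & (forall t, A t -> exists i, C i = connected_component A t)].

Definition visits (s : R -> pt V R) (x : pt V R) (n : nat) : Prop :=
  ncomp (preim s x) n.

Definition deg (x : pt V R) : nat :=
  match x with
  | PRoot => #|children root|
  | POn v h => if h == fv v then #|children v| else 1%N
  end.

Definition upper (v : V) : pt V R :=
  if parent v == root then PRoot else POn (parent v) (fv (parent v)).

(* x is a strict ancestor of v on the parent edge of v (possibly its upper
   endpoint), i.e. the planted subtree T_{x,v} is defined *)
Definition planted_at (x : pt V R) (v : V) : Prop :=
  v != root /\ (x = upper v \/ exists2 h, x = POn v h & fv v < h).

Definition in_planted (x : pt V R) (v : V) (y : pt V R) : Prop :=
  [/\ desc y x, y <> x & exists w k, y = POn w k /\ anc_or_self v w].

Definition unvisited (s : R -> pt V R) (y : pt V R) : Prop :=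
  forall t, 0 <= t <= 1 -> s t <> y.

Definition planted_unvisited (s : R -> pt V R) (x : pt V R) (v : V) : Prop :=
  forall y, in_planted x v y -> unvisited s y.

Definition kappa (s : R -> pt V R) (x : pt V R) : nat :=
  #|[pred v : V | `[< planted_at x v /\ planted_unvisited s x v >] ]|.

Definition layer_order (le : R -> pt V R -> pt V R -> Prop) : Prop :=
  (forall h, 0 <= h ->
     [/\ (forall x, layer h x -> le h x x),
         (forall x y, layer h x -> layer h y -> le h x y -> le h y x -> x = y),
         (forall x y z, layer h x -> layer h y -> layer h z ->
                        le h x y -> le h y z -> le h x z)
       & (forall x y, layer h x -> layer h y -> le h x y \/ le h y x)]) /\
  (forall h1 h2 x1 x2 y1 y2, 0 <= h1 -> h1 <= h2 ->
     layer h1 x1 -> layer h1 x2 -> le h1 x1 x2 ->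
     layer h2 y1 -> layer h2 y2 -> desc x1 y1 -> desc x2 y2 ->
     le h2 y1 y2).

Definition partial_inorder (le : R -> pt V R -> pt V R -> Prop)
    (tau : R -> pt V R) : Prop :=
  [/\ curve tau, tau 0 = PRoot, tau 1 = PRoot,
      (forall t1 t2 h, 0 <= t1 <= 1 -> 0 <= t2 <= 1 ->
         hgt (tau t1) = Some h -> hgt (tau t2) = Some h ->
         le h (tau t1) (tau t2) -> tau t1 <> tau t2 -> t1 < t2)
    & (forall x, valid x -> visits tau x (deg x + 1 - kappa tau x)%N)].

Definition inorder (le : R -> pt V R -> pt V R -> Prop)
    (tau : R -> pt V R) : Prop :=
  partial_inorder le tau /\ (forall x, valid x -> visits tau x (deg x + 1)%N).

End MergeTree.

(* Main.v *)
Require Import Defs.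
From HB Require Import structures.
From mathcomp Require Import all_boot all_order all_algebra.
From mathcomp Require Import all_classical all_reals all_analysis.
From mathcomp Require Import lra zify.
Import Order.TTheory GRing.Theory Num.Theory numFieldNormedType.Exports.
Local Open Scope ring_scope.
Local Open Scope classical_set_scope.
Set Implicit Arguments. Unset Strict Implicit.

Section S.
Variables (R : realType) (V : finType) (root : V) (parent : V -> V) (fv : V -> R).
Hypothesis MT : merge_tree root parent fv.

Local Notation anc := (anc_or_self parent).
Local Notation valid := (valid root parent fv).
Local Notation desc := (desc root parent fv).

Lemma iter_root n : iter n parent root = root.
Proof. case: MT => pr _ _ _; elim: n => //= n ->; exact: pr. Qed.

Lemma anc_refl v : anc v v.
Proof. by exists 0%N. Qed.

Lemma anc_trans a b c : anc a b -> anc b c -> anc a c.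
Proof. by move=> [m <-] [n <-]; exists (m + n)%N; rewrite iterD. Qed.

Lemma anc_root a : anc a root -> a = root.
Proof. by move=> [n <-]; rewrite iter_root. Qed.

Lemma anc_parent u w : anc u w -> u != w -> anc u (parent w).
Proof.
move=> [[|n] <-]; first by rewrite /= eqxx.
by move=> _; exists n; rewrite iterSr.
Qed.

Lemma anc_chain u w v : anc u v -> anc w v -> anc u w \/ anc w u.
Proof.
move=> [n <-] [m <-]; case: (leqP n m) => hnm.
  right; exists (m - n)%N; by rewrite -iterD subnK.
left; exists (n - m)%N; rewrite -iterD subnK //; exact: ltnW.
Qed.

Lemma fv_mono a b : anc a b -> a != root -> fv b <= fv a.
Proof.
case: MT => pr _ inc _ [n]; elim: n b => [|n IH] b; first by move=> <- _ /=.
move=> hb har; rewrite iterSr in hb.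
have pbr : parent b != root.
  by apply/eqP => e; rewrite e iter_root in hb; rewrite hb eqxx in har.
have br : b != root.
  by apply/eqP => e; rewrite e pr iter_root in hb; rewrite hb eqxx in har.
apply: le_trans (IH _ hb har); apply: ltW; exact: inc.
Qed.

Lemma fv_lt_valid a b h : anc a b -> a != b -> a != root ->
  valid (POn b h) -> h < fv a.
Proof.
move=> hab hne har [_ _ [pr|lt]].
  by move: (anc_parent hab hne); rewrite pr => /anc_root/eqP; rewrite (negbTE har).
apply: (lt_le_trans lt); apply: fv_mono => //; exact: anc_parent.
Qed.

Lemma fv_ge0 v : v != root -> 0 <= fv v.
Proof.
case: MT => pr _ inc [l [lr _] [_ hl]] vr.
pose P := [pred u | (u != root) && `[< anc v u >]].
have Pv : P v by rewrite /P /= vr; apply/asboolP; exact: anc_refl.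
case: (@Order.TotalTheory.arg_minP _ _ _ v P fv Pv) => u /andP [ur /asboolP avu] hmin.
have leaf : is_leaf root parent u.
  split => //; apply/eqP; rewrite -leqn0 leqNgt; apply/negP => /card_gt0P [c].
  rewrite inE /= => /andP [cr /eqP pc].
  have Pc : P c.
    rewrite /P /= cr; apply/asboolP; apply: anc_trans avu _; exists 1%N; by rewrite /= pc.
  have := hmin c Pc; rewrite leNgt => /negP; apply; rewrite -pc; apply: inc => //.
  by rewrite pc.
apply: le_trans (hl _ leaf) (fv_mono avu vr).
Qed.

Lemma gle (a b : R) : 0 <= a -> a <= b -> a / (1 + a) <= b / (1 + b).
Proof.
move=> a0 ab; have ha : 0 < 1 + a by lra. have hb : 0 < 1 + b by lra.
rewrite ler_pdivrMr // mulrAC ler_pdivlMr //; nra.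
Qed.

Lemma glt (a b : R) : 0 <= a -> a < b -> a / (1 + a) < b / (1 + b).
Proof.
move=> a0 ab; have ha : 0 < 1 + a by lra. have hb : 0 < 1 + b by lra.
rewrite ltr_pdivrMr // mulrAC ltr_pdivlMr //; nra.
Qed.

Lemma glt1 (a : R) : 0 <= a -> a / (1 + a) < 1.
Proof.
move=> a0; have ha : 0 < 1 + a by lra.
rewrite ltr_pdivrMr //; lra.
Qed.

Lemma valid_ge0 v h : valid (POn v h) -> 0 <= h.
Proof. by move=> [vr le _]; apply: le_trans (fv_ge0 vr) le. Qed.

Lemma desc_valid y c : desc y c -> valid y /\ valid c.
Proof. by case=> [? [? _]]. Qed.

Lemma g_mono y c : desc y c -> g y <= g c.
Proof.
case: c => [|u hc]; case: y => [|v hy] [vy [vc H]] //=.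
- exact/ltW/glt1/(valid_ge0 vy).
- by case: H => _ le; apply: gle => //; exact: (valid_ge0 vy).
Qed.

Lemma desc_refl x : valid x -> desc x x.
Proof. by case: x => [|v h] vx; do 2 split => //; split => //; exact: anc_refl. Qed.

Lemma desc_trans y c p : desc y c -> desc c p -> desc y p.
Proof.
case: p => [|w k]; case: c => [|u hc]; case: y => [|v hy] //= [vy [vc H1]] [_ [vp H2]] //.
do 2 split => //; case: H1 => a1 l1; case: H2 => a2 l2; split.
  exact: anc_trans a2 a1.
exact: le_trans l1 l2.
Qed.

Lemma cmp_edge u hc w k : anc u w -> valid (POn u hc) -> valid (POn w k) ->
  desc (POn w k) (POn u hc) \/ desc (POn u hc) (POn w k).
Proof.
move=> auw vc vp; case: (eqVneq u w) => [euw|nuw].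
  subst u; case: (lerP k hc) => hkc.
    by left; do 2 split => //; split => //; exact: anc_refl.
  by right; do 2 split => //; split; [exact: anc_refl | exact: ltW].
left; do 2 split => //; split => //.
case: vc => ur fu _; apply/ltW; apply: lt_le_trans fu.
exact: fv_lt_valid auw nuw ur vp.
Qed.

Lemma chain y c p : desc y c -> desc y p -> desc c p \/ desc p c.
Proof.
case: p => [|w k]; case: c => [|u hc]; case: y => [|v hy]; rewrite /Defs.desc /=.
all: try by move=> [? [? []]].
all: try by move=> _ [? [? []]].
all: try by move=> [? [? _]] [? [? _]]; left; split; [done|split].
all: try by move=> [? [? _]] [? [? _]]; right; split; [done|split].
move=> [_ [vc [a1 _]]] [_ [vp [a2 _]]].
case: (anc_chain a1 a2) => a.
  by case: (cmp_edge a vc vp) => H; [right|left].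
by case: (cmp_edge a vp vc) => H; [left|right].
Qed.

Definition gU w : R := if parent w == root then 1 else g (POn (parent w) (fv (parent w)) : pt V R).

Lemma above_edge w k c : valid (POn w k) -> desc (POn w k) c ->
  (exists hc, c = POn w hc) \/ gU w <= g c.
Proof.
move=> vp; case: c => [|u hc] [_ [vc H]].
  right; rewrite /gU; case: ifP => pr //=.
  apply/ltW/glt1/fv_ge0; exact/negbT.
case: (eqVneq u w) => [->|nuw]; first by left; exists hc.
right; case: H => auw _.
have ur : u != root by case: vc.
have apw := anc_parent auw nuw.
have pwr : parent w != root.
  by apply/eqP => e; rewrite e in apw; move/anc_root: apw => e'; rewrite e' eqxx in ur.
rewrite /gU (negbTE pwr) /=; apply: gle; first exact: fv_ge0.
apply: le_trans (fv_mono apw ur) _; by case: vc.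
Qed.

Local Notation closeT := (Defs.close root parent fv).

Lemma gU_gt w k : valid (POn w k) -> k / (1 + k) < gU w.
Proof.
move=> vp; have k0 := valid_ge0 vp; rewrite /gU; case: ifP => pr; first exact: glt1.
case: vp => _ _ [pr'|lt]; first by rewrite pr' eqxx in pr.
exact: glt.
Qed.

Lemma openness w k z : valid (POn w k) -> valid z -> z <> POn w k ->
  exists2 e : R, 0 < e & forall y, closeT y z e ->
    (desc y (POn w k) <-> desc z (POn w k)).
Proof.
move=> vp vz nzp; set p := POn w k.
have gp : g p = k / (1 + k) by [].
have k0 := valid_ge0 vp.
have [dz|ndz] := pselect (desc z p).
  case: z vz nzp dz => [|v hz] vz nzp dz; first by case: dz => _ [_ []].
  case: (dz) => _ [_ [awv hzk]].
  have hzk' : hz < k.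
    case: (eqVneq v w) => [evw|nvw].
      by rewrite lt_neqAle hzk andbT; apply/eqP => e; apply: nzp; rewrite evw e.
    apply: lt_le_trans (fv_lt_valid awv _ _ vz) _ => //; first by rewrite eq_sym.
      by case: vp.
    by case: vp.
  have hz0 := valid_ge0 vz.
  exists (k / (1 + k) - hz / (1 + hz)); first by rewrite subr_gt0; exact: glt.
  move=> y [c [dyc dzc lt]]; split => // _.
  case: (chain dzc dz) => [dcp|dpc]; first exact: desc_trans dyc dcp.
  have h1 := g_mono dpc; have h2 := g_mono dyc; move: lt; rewrite /= -gp; lra.
have [gzp|gzp] := ltP (g p) (g z).
  exists (g z - g p); first by rewrite subr_gt0.
  move=> y [c [dyc dzc lt]]; split => // dyp; exfalso.
  have h1 := g_mono dzc; have h2 := g_mono dyc; have h3 := g_mono dyp; clear nzp; lra.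
exists (gU w - g p); first by rewrite subr_gt0; exact: gU_gt.
move=> y [c [dyc dzc lt]]; split => // dyp; exfalso.
case: (chain dyc dyp) => [dcp|dpc]; first by apply: ndz; exact: desc_trans dzc dcp.
have h2 := g_mono dyc; have h3 := g_mono dyp; have h1 := g_mono dzc.
case: (above_edge vp dpc) => [[hc ec]|hU]; last by clear nzp; lra.
subst c; case: z vz nzp ndz gzp dzc h1 lt => [|v hz] vz nzp ndz gzp dzc h1 lt.
  by case: dzc => _ [_ []].
case: dzc => _ [_ [awv hzc]]; apply: ndz; do 2 split => //; split => //.
rewrite leNgt; apply/negP => khz; move: gzp; rewrite leNgt gp /=.
by rewrite (glt k0 khz).
Qed.

Local Notation curveT := (Defs.curve root parent fv).

Lemma curve_open s w k t0 : curveT s -> valid (POn w k) -> 0 <= t0 <= 1 ->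
  s t0 <> POn w k ->
  exists2 d : R, 0 < d & forall u, 0 <= u <= 1 -> `|u - t0| < d ->
    (desc (s u) (POn w k) <-> desc (s t0) (POn w k)).
Proof.
move=> [cv cc] vp ht0 hne.
have [e e0 He] := openness vp (cv t0 ht0) hne.
have [d d0 Hd] := cc t0 ht0 e e0.
by exists d => // u hu hd; apply: He; exact: Hd.
Qed.

Lemma ivt s w k a b : curveT s -> valid (POn w k) -> 0 <= a -> a <= b -> b <= 1 ->
  ~ (desc (s a) (POn w k) <-> desc (s b) (POn w k)) ->
  exists u, a <= u <= b /\ s u = POn w k.
Proof.
move=> cv vp a0 ab b1 hst; set p := POn w k.
have [//|H] := pselect (exists u, a <= u <= b /\ s u = p).
have hne : forall u, a <= u <= b -> s u <> p by move=> u hu e; apply: H; exists u.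
exfalso.
pose st t := (desc (s t) p <-> desc (s a) p).
pose S := [set t | a <= t <= b /\ st t].
have Sa : S a by split; [rewrite lexx ab | done].
have ubS : ubound S b by move=> t [/andP [_ ?] _].
have hs : has_sup S by split; [exists a | exists b].
set u := sup S.
have au : a <= u := sup_upper_bound hs Sa.
have ub : u <= b := ge_sup (ex_intro _ a Sa) ubS.
have hu01 : 0 <= u <= 1 by apply/andP; split; lra.
have [d d0 Hd] := curve_open cv vp hu01 (hne u (introT andP (conj au ub))).
have [stu|nstu] := pselect (st u).
  have ublt : u < b.
    rewrite lt_neqAle ub andbT; apply/eqP => e; apply: hst.
    by move: stu; rewrite /st e; tauto.
  have key : forall t', u < t' -> t' <= b -> t' - u < d -> False.
    move=> t' h1 h2 h3.
    have St' : S t'.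
      split; first by apply/andP; split; lra.
      have : desc (s t') p <-> desc (s u) p.
        apply: Hd; first by apply/andP; split; lra.
        rewrite ltr_norml; apply/andP; split; lra.
      by move: stu; rewrite /st; tauto.
    have := sup_upper_bound hs St'; rewrite -/u; lra.
  have [hle|hgt] := leP (u + d / 2) b.
    by apply: (key (u + d / 2)); lra.
  by apply: (key b); lra.
have [t St ht] := sup_adherent d0 hs; rewrite -/u in ht.
have tu : t <= u := sup_upper_bound hs St.
case: St => /andP [hat htb] stt; apply: nstu.
have : desc (s t) p <-> desc (s u) p.
  apply: Hd; first by apply/andP; split; lra.
  rewrite ltr_norml; apply/andP; split; lra.
by move: stt; rewrite /st; tauto.
Qed.

Lemma sep_comp (A : set R) a s b : a < s -> s < b -> A a -> A b -> ~ A s ->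
  connected_component A a <> connected_component A b.
Proof.
move=> h1 h2 Aa Ab nAs E.
have Cb : connected_component A a b by rewrite E; exact: connected_component_refl.
have Ca := connected_component_refl Aa.
have CC : connected (connected_component A a) by exact: component_connected.
have := (connected_intervalP _).1 CC a b Ca Cb s.
move=> /(_ (introT andP (conj (ltW h1) (ltW h2)))) /connected_component_sub.
exact: nAs.
Qed.

Lemma ncomp3 (A : set R) n a1 s1 a2 s2 a3 : ncomp A n ->
  a1 < s1 -> s1 < a2 -> a2 < s2 -> s2 < a3 -> A a1 -> A a2 -> A a3 ->
  ~ A s1 -> ~ A s2 -> (3 <= n)%N.
Proof.
move=> [C [Cinj _ Ccov]] h1 h2 h3 h4 A1 A2 A3 N1 N2.
have [i1 e1] := Ccov a1 A1; have [i2 e2] := Ccov a2 A2; have [i3 e3] := Ccov a3 A3.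
have n12 : i1 <> i2 by move=> e; apply: (sep_comp h1 h2 A1 A2 N1); rewrite -e1 -e2 e.
have n23 : i2 <> i3 by move=> e; apply: (sep_comp h3 h4 A2 A3 N2); rewrite -e2 -e3 e.
have n13 : i1 <> i3.
  move=> e; apply: (@sep_comp A a1 s1 a3 h1 _ A1 A3 N1); first lra.
  by rewrite -e1 -e3 e.
have v12 : nat_of_ord i1 <> nat_of_ord i2 by move=> e; apply: n12; exact: val_inj.
have v23 : nat_of_ord i2 <> nat_of_ord i3 by move=> e; apply: n23; exact: val_inj.
have v13 : nat_of_ord i1 <> nat_of_ord i3 by move=> e; apply: n13; exact: val_inj.
have := ltn_ord i1; have := ltn_ord i2; have := ltn_ord i3.
move: (nat_of_ord i1) (nat_of_ord i2) (nat_of_ord i3) v12 v23 v13 => x y z.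
clear; lia.
Qed.

Ltac rlra := solve [ repeat match goal with
  | H : @eq (pt _ _) _ _ |- _ => clear H
  | H : ~ @eq (pt _ _) _ _ |- _ => clear H
  | H : @eq (pt _ _) _ _ -> False |- _ => clear H
  end; lra ].

Lemma main (le : R -> pt V R -> pt V R -> Prop) (tau : R -> pt V R) :
  partial_inorder root parent fv le tau ->
  forall x : pt V R, valid x ->
  forall t1 t2 : R, 0 <= t1 -> t1 <= t2 -> t2 <= 1 ->
  tau t1 = x -> tau t2 = x ->
  forall t : R, t1 <= t <= t2 -> desc (tau t) x.
Proof.
move=> [cv tau0 tau1 _ vis] x vx t1 t2 h0 h12 h21 e1 e2 t /andP [ht1 ht2].
have ht01 : 0 <= t <= 1 by apply/andP; split; rlra.
have vz := cv.1 t ht01.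
have [//|Hn] := pselect (desc (tau t) x).
exfalso.
case: x vx e1 e2 Hn => [|w h] vx e1 e2 Hn.
  by apply: Hn; split => //; split.
set B := if parent w == root then h + 1 else fv (parent w).
have hB : h < B.
  rewrite /B; case: ifP => pr; first rlra.
  by case: vx => _ _ [pr'|//]; rewrite pr' eqxx in pr.
have [k [hk kB kz]] : exists k, [/\ h < k, k < B &
    forall v hz, tau t = POn v hz -> h < hz -> k < hz].
  case E: (tau t) => [|v hz]; clear E.
    by exists ((h + B) / 2); split => //; rlra.
  have [hhz|hhz] := ltP h hz.
    have [Bz|Bz] := leP B hz.
      exists ((h + B) / 2); split; try rlra.
      by move=> v' hz' [_ <-] _; rlra.
    exists ((h + hz) / 2); split; try rlra.
    by move=> v' hz' [_ <-] _; rlra.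
  exists ((h + B) / 2); split; try rlra.
  by move=> v' hz' [_ <-] ?; rlra.
set p := POn w k.
have vp : valid p.
  case: vx => wr fwh pr; split => //; first by apply: le_trans fwh _; exact: ltW.
  move: kB; rewrite /B; case: ifP => [/eqP pr' _|_ kB']; [by left | by right].
have dxp : desc (POn w h) p.
  by split => //; split => //; split; [exact: anc_refl | exact: ltW].
have xnp : POn w h <> p by case => e; move: hk; rewrite e ltxx.
have nzp : ~ desc (tau t) p.
  move=> dzp; case E: (tau t) => [|v hz]; rewrite E in dzp Hn vz.
    by case: dzp => _ [_ []].
  case: dzp => _ [_ [awv hzk]].
  have hhz : h < hz.
    rewrite ltNge; apply/negP => hzh; apply: Hn; split => //; split => //.
  by have := kz v hz E hhz; rlra.
have tp : tau t <> p by move=> e; apply: nzp; rewrite e; exact: desc_refl.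
have tne : t1 < t.
  rewrite lt_neqAle ht1 andbT; apply/eqP => e; apply: Hn; rewrite -e e1.
  exact: desc_refl.
have tt2 : t < t2.
  rewrite lt_neqAle ht2 andbT; apply/eqP => e; apply: Hn; rewrite e e2.
  exact: desc_refl.
have t10 : 0 < t1.
  by rewrite lt_neqAle h0 andbT; apply/eqP => e; rewrite -e tau0 in e1.
have [u1 [/andP [hu1 hu1'] pu1]] : exists u, 0 <= u <= t1 /\ tau u = p.
  apply: ivt cv vp (lexx 0) h0 _ _; first rlra.
  by rewrite tau0 e1; case => _ /(_ dxp) [_ [_ []]].
have [u2 [/andP [hu2 hu2'] pu2]] : exists u, t1 <= u <= t /\ tau u = p.
  apply: ivt cv vp h0 ht1 _ _; first by case/andP: ht01.
  by rewrite e1; case => /(_ dxp).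
have [u3 [/andP [hu3 hu3'] pu3]] : exists u, t <= u <= t2 /\ tau u = p.
  apply: ivt cv vp _ ht2 h21 _; first by case/andP: ht01.
  by rewrite e2; case => _ /(_ dxp).
have u1t1 : u1 < t1 by rewrite lt_neqAle hu1' andbT; apply/eqP => e; apply: xnp; rewrite -e1 -e.
have t1u2 : t1 < u2 by rewrite lt_neqAle hu2 andbT; apply/eqP => e; apply: xnp; rewrite -e1 e.
have u2t : u2 < t by rewrite lt_neqAle hu2' andbT; apply/eqP => e; apply: tp; rewrite -e.
have tu3 : t < u3 by rewrite lt_neqAle hu3 andbT; apply/eqP => e; apply: tp; rewrite e.
have := ncomp3 (vis p vp) u1t1 t1u2 u2t tu3.
have P1 : Defs.preim tau p u1 by split => //; apply/andP; split; rlra.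
have P2 : Defs.preim tau p u2 by split => //; apply/andP; split; rlra.
have P3 : Defs.preim tau p u3 by split => //; apply/andP; split; rlra.
have N1 : ~ Defs.preim tau p t1 by case => _ e; apply: xnp; rewrite -e1.
have N2 : ~ Defs.preim tau p t by case => _ e; apply: tp.
move=> /(_ P1 P2 P3 N1 N2).
have -> : deg root parent fv p = 1%N.
  rewrite /= ifF //; apply/negbTE; rewrite neq_lt; apply/orP; right.
  case: vx => _ fwh _; rlra.
move=> H3; move: H3; set kk := kappa _ _ _ _ _; clear; lia.
Qed.

End S.

Unset Implicit Arguments.
Local Close Scope classical_set_scope.

Theorem corollary12 (R : realType) (V : finType) (root : V) (parent : V -> V)
    (fv : V -> R) (le : R -> pt V R -> pt V R -> Prop) (tau : R -> pt V R) :
  merge_tree root parent fv ->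
  layer_order root parent fv le ->
  partial_inorder root parent fv le tau ->
  forall x : pt V R, valid root parent fv x ->
  forall t1 t2 : R, 0 <= t1 -> t1 <= t2 -> t2 <= 1 ->
  tau t1 = x -> tau t2 = x ->
  forall t : R, t1 <= t <= t2 -> desc root parent fv (tau t) x.
Proof.
move=> MT _ PI; exact: (main MT PI).
Qed.
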